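(* Let $O$ be a split Cayley algebra over a field $F$ of characteristic $\neq2$, let $\mathfrak{H}$ be any collection of 4-dimensional associative subalgebras of $O$ and $\mathfrak{B}=\{\operatorname{im}(H):H\in\mathfrak{H}\}$. Then either some 2-dimensional subspace of $\operatorname{im}(O)$ of type M is contained in no element of $\mathfrak{B}$, or some 2-dimensional subspace of $\operatorname{im}(O)$ of type U is contained in more than one element of $\mathfrak{B}$. In particular no such $\mathfrak{B}$ is a $2$-$(7,3,1)$ subspace design on $\operatorname{im}(O)$.
   Context: Cayley algebra: $D_\gamma(D_\beta(D_\alpha(F)))$, $\alpha,\beta,\gamma\in F^\times$, with $D_\gamma(A)=A\oplus A$ (elements $a+ib$), $(a+ib)(c+id)=(ac+\gamma db^* )+i(a^*d+cb)$, $(a+ib)^*=a^*-ib$, starting from $F$ with identity involution; $\operatorname{im}(O)=\{a:a^*=-a\}$. Split: $O$ contains zero divisors. Nilpotent line: 1-dimensional subspace of nilpotent elements. A 2-dimensional $U\subseteq\operatorname{im}(O)$ is of type M if it contains exactly two nilpotent lines, and of type U if it contains exactly one nilpotent line $Fu$ and $uv\in Fu$ for all $v\in U$. A $2$-$(7,3,1)$ subspace design: 3-dimensional subspaces such that each 2-dimensional subspace lies in exactly one. *)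

(* Defs.v *)
From HB Require Import structures.
From mathcomp Require Import all_boot all_order all_algebra.
Set Implicit Arguments. Unset Strict Implicit. Unset Printing Implicit Defensive.
Import Order.TTheory GRing.Theory Num.Theory.
Local Open Scope ring_scope.

Section Cayley.
Variable F : fieldType.

(* One Cayley-Dickson doubling step D_g(A) = A (+) A, element (a,b) = a + i b:
   (a+ib)(c+id) = (ac + g d b^* ) + i(a^* d + c b),   (a+ib)^* = a^* - i b. *)
Definition dmul (V : lmodType F) (mul : V -> V -> V) (conj : V -> V) (g : F)
  (x y : V * V) : V * V :=
  (mul x.1 y.1 + g *: mul y.2 (conj x.2), mul (conj x.1) y.2 + mul y.1 x.2).
Definition dconj (V : lmodType F) (conj : V -> V) (x : V * V) : V * V :=
  (conj x.1, - x.2).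

Definition Alg1 := (F^o)%type.
Definition Alg2 := (Alg1 * Alg1)%type.
Definition Alg4 := (Alg2 * Alg2)%type.
(* carrier of the Cayley algebra D_gamma(D_beta(D_alpha(F))) *)
Definition Oct := (Alg4 * Alg4)%type.

Definition conj1 : Alg1 -> Alg1 := id.
Definition conj2 : Alg2 -> Alg2 := dconj conj1.
Definition conj4 : Alg4 -> Alg4 := dconj conj2.
Definition oconj : Oct -> Oct := dconj conj4.

Definition mul1 : Alg1 -> Alg1 -> Alg1 := fun x y => (x : F) * y.
Definition mul2 (a : F) : Alg2 -> Alg2 -> Alg2 := dmul mul1 conj1 a.
Definition mul4 (a b : F) : Alg4 -> Alg4 -> Alg4 := dmul (mul2 a) conj2 b.
Definition omul (a b g : F) : Oct -> Oct -> Oct := dmul (mul4 a b) conj4 g.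

Definition oone : Oct := (((1 : F^o, 0 : F^o), (0 : F^o, 0 : F^o)), 0).

Definition inIm (x : Oct) : Prop := oconj x = - x.

(* powers x^(n+1) := x (x (... x)) ; nilpotent: some power vanishes *)
Definition nilpotent (a b g : F) (x : Oct) : Prop :=
  exists n : nat, iter n (omul a b g x) x = 0.

Definition nil_line (a b g : F) (L : {vspace Oct}) : Prop :=
  \dim L = 1%N /\ forall x, x \in L -> nilpotent a b g x.

Definition sub_im (U : {vspace Oct}) : Prop := forall x, x \in U -> inIm x.

Definition typeM (a b g : F) (U : {vspace Oct}) : Prop :=
  [/\ \dim U = 2%N, sub_im U &
   exists L1 L2, [/\ L1 != L2, nil_line a b g L1 /\ (L1 <= U)%VS,
     nil_line a b g L2 /\ (L2 <= U)%VS &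
     forall L, nil_line a b g L -> (L <= U)%VS -> L = L1 \/ L = L2]].

Definition typeU (a b g : F) (U : {vspace Oct}) : Prop :=
  [/\ \dim U = 2%N, sub_im U &
   exists u, [/\ nil_line a b g <[u]>%VS, (<[u]> <= U)%VS,
     (forall L, nil_line a b g L -> (L <= U)%VS -> L = <[u]>%VS) &
     forall v, v \in U -> omul a b g u v \in <[u]>%VS]].

Definition assoc_subalg4 (a b g : F) (H : {vspace Oct}) : Prop :=
  [/\ \dim H = 4%N, oone \in H,
   (forall x y, x \in H -> y \in H -> omul a b g x y \in H) &
   (forall x y z, x \in H -> y \in H -> z \in H ->
      omul a b g (omul a b g x y) z = omul a b g x (omul a b g y z))].

Definition is_im_of (H B : {vspace Oct}) : Prop :=
  forall x, x \in B <-> (x \in H /\ inIm x).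

Definition inB (frakH : {vspace Oct} -> Prop) (B : {vspace Oct}) : Prop :=
  exists2 H, frakH H & is_im_of H B.

Definition design_2_7_3_1 (frakB : {vspace Oct} -> Prop) : Prop :=
  (forall B, frakB B -> \dim B = 3%N /\ sub_im B) /\
  (forall U : {vspace Oct}, \dim U = 2%N -> sub_im U ->
     exists B, [/\ frakB B, (U <= B)%VS &
       forall B', frakB B' -> (U <= B')%VS -> B' = B]).

End Cayley.

(* Main.v *)
Require Import Defs.
From HB Require Import structures.
From mathcomp Require Import all_boot all_order all_algebra.
From mathcomp Require Import ring.
From Stdlib Require Import Classical.
Import GRing.Theory.
Local Open Scope ring_scope.
Set Implicit Arguments. Unset Strict Implicit. Unset Printing Implicit Defensive.
Section S.
Variables (F : fieldType) (a b g : F).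
Definition P2 := (F * F)%type.
Definition P4 := (P2 * P2)%type.
Definition P8 := (P4 * P4)%type.
Definition ad2 (x y : P2) : P2 := (x.1 + y.1, x.2 + y.2).
Definition sc2 (k : F) (x : P2) : P2 := (k * x.1, k * x.2).
Definition cj2 (x : P2) : P2 := (x.1, - x.2).
Definition ng2 (x : P2) : P2 := (- x.1, - x.2).
Definition m2 (x y : P2) : P2 := (x.1 * y.1 + a * (y.2 * x.2), x.1 * y.2 + y.1 * x.2).
Definition ad4 (x y : P4) : P4 := (ad2 x.1 y.1, ad2 x.2 y.2).
Definition sc4 (k : F) (x : P4) : P4 := (sc2 k x.1, sc2 k x.2).
Definition cj4 (x : P4) : P4 := (cj2 x.1, ng2 x.2).
Definition ng4 (x : P4) : P4 := (ng2 x.1, ng2 x.2).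
Definition m4 (x y : P4) : P4 := (ad2 (m2 x.1 y.1) (sc2 b (m2 y.2 (cj2 x.2))), ad2 (m2 (cj2 x.1) y.2) (m2 y.1 x.2)).
Definition ad8 (x y : P8) : P8 := (ad4 x.1 y.1, ad4 x.2 y.2).
Definition sc8 (k : F) (x : P8) : P8 := (sc4 k x.1, sc4 k x.2).
Definition ng8 (x : P8) : P8 := (ng4 x.1, ng4 x.2).
Definition cj8 (x : P8) : P8 := (cj4 x.1, ng4 x.2).
Definition m8 (x y : P8) : P8 := (ad4 (m4 x.1 y.1) (sc4 g (m4 y.2 (cj4 x.2))), ad4 (m4 (cj4 x.1) y.2) (m4 y.1 x.2)).
Definition nrm8 (x : P8) : F :=
  x.1.1.1 ^+ 2 - a * x.1.1.2 ^+ 2 - b * x.1.2.1 ^+ 2 + a * b * x.1.2.2 ^+ 2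
  - g * x.2.1.1 ^+ 2 + a * g * x.2.1.2 ^+ 2 + b * g * x.2.2.1 ^+ 2 - a * b * g * x.2.2.2 ^+ 2.
Definition toP (p : Oct F) : P8 := p.
Definition one8 : P8 := ((1,0),(0,0),((0,0),(0,0))).
Definition zero8 : P8 := ((0,0),(0,0),((0,0),(0,0))).
Lemma omulE (p q : Oct F) : toP (omul a b g p q) = m8 (toP p) (toP q).
Proof. reflexivity. Qed.
Lemma addE (p q : Oct F) : toP (p + q) = ad8 (toP p) (toP q).
Proof. reflexivity. Qed.
Lemma sclE k (p : Oct F) : toP (k *: p) = sc8 k (toP p).
Proof. reflexivity. Qed.
Lemma oppE (p : Oct F) : toP (- p) = ng8 (toP p).
Proof. reflexivity. Qed.
Lemma subE (p q : Oct F) : toP (p - q) = ad8 (toP p) (ng8 (toP q)).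
Proof. reflexivity. Qed.
Lemma conjE (p : Oct F) : toP (oconj p) = cj8 (toP p).
Proof. reflexivity. Qed.
Lemma oneE : toP (oone F) = one8.
Proof. reflexivity. Qed.
Lemma zeroE : toP 0 = zero8.
Proof. reflexivity. Qed.
Lemma toP_inj (p q : Oct F) : toP p = toP q -> p = q. Proof. by []. Qed.
Definition c1 (p : Oct F) : F := (toP p).1.1.1.
Definition nrm (p : Oct F) : F := nrm8 (toP p).
Definition bil (p q : Oct F) : F := nrm (p + q) - nrm p - nrm q.
Local Notation mul := (omul a b g).
Local Notation o1 := (oone F).
Definition mk (x : P8) : Oct F := x.
Definition E2 : P8 := ((0,1),(0,0),((0,0),(0,0))).
Definition E3 : P8 := ((0,0),(1,0),((0,0),(0,0))).
Definition E4 : P8 := ((0,0),(0,1),((0,0),(0,0))).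
Definition E5 : P8 := ((0,0),(0,0),((1,0),(0,0))).
Definition E6 : P8 := ((0,0),(0,0),((0,1),(0,0))).
Definition E7 : P8 := ((0,0),(0,0),((0,0),(1,0))).
Definition E8 : P8 := ((0,0),(0,0),((0,0),(0,1))).
Ltac dO p := let p1 := fresh "p" in let p2 := fresh "p" in let p3 := fresh "p" in let p4 := fresh "p" in
  let p5 := fresh "p" in let p6 := fresh "p" in let p7 := fresh "p" in let p8 := fresh "p" in
  destruct p as [[[p1 p2] [p3 p4]] [[p5 p6] [p7 p8]]].
Ltac norm := rewrite /bil /nrm /c1; rewrite ?(omulE, addE, sclE, oppE, conjE, oneE, zeroE);
  repeat match goal with p : Oct F |- _ => dO p end;
  cbv beta iota zeta delta [m8 m4 ad4 sc4 cj4 ng4 m2 ad2 sc2 cj2 ng2 ad8 sc8 ng8 cj8 nrm8 one8 zero8 toP mk E2 E3 E4 E5 E6 E7 E8 fst snd].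
Ltac octR := apply: toP_inj; norm; (do ! congr (_, _)); ring.
Ltac octF := norm; ring.

Lemma mul_addr (p q r : Oct F) : mul p (q + r) = mul p q + mul p r. Proof. octR. Qed.
Lemma mul_addl (p q r : Oct F) : mul (q + r) p = mul q p + mul r p. Proof. octR. Qed.
Lemma mul_sclr k (p q : Oct F) : mul p (k *: q) = k *: mul p q. Proof. octR. Qed.
Lemma mul_scll k (p q : Oct F) : mul (k *: p) q = k *: mul p q. Proof. octR. Qed.
Lemma om1l (p : Oct F) : mul o1 p = p. Proof. octR. Qed.
Lemma om1r (p : Oct F) : mul p o1 = p. Proof. octR. Qed.
Lemma om0r (p : Oct F) : mul p 0 = 0. Proof. octR. Qed.
Lemma alt (p q : Oct F) : mul p (mul p q) = mul (mul p p) q. Proof. octR. Qed.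
Lemma altlin (p r q : Oct F) : mul p (mul r q) + mul r (mul p q) = mul (mul p r + mul r p) q.
Proof. octR. Qed.
Lemma sqE (p : Oct F) : mul p p = (2 * c1 p) *: p - nrm p *: o1. Proof. octR. Qed.
Lemma anti (p q : Oct F) : mul p q + mul q p = (2 * c1 p) *: q + (2 * c1 q) *: p - bil p q *: o1.
Proof. octR. Qed.
Lemma c1mul (p q : Oct F) : 2 * c1 (mul p q) = 4 * c1 p * c1 q - bil p q. Proof. octF. Qed.
Lemma bilmul (p q : Oct F) : bil p (mul p q) = nrm p * (2 * c1 q). Proof. octF. Qed.
Lemma bilmul2 (p q : Oct F) : bil (mul p q) q = nrm q * (2 * c1 p). Proof. octF. Qed.
Lemma nrm_add (p q : Oct F) : nrm (p + q) = nrm p + nrm q + bil p q. Proof. rewrite /bil; ring. Qed.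
Lemma nrm_scl k (p : Oct F) : nrm (k *: p) = k ^+ 2 * nrm p. Proof. octF. Qed.
Lemma nrm_opp (p : Oct F) : nrm (- p) = nrm p. Proof. octF. Qed.
Lemma bilC (p q : Oct F) : bil p q = bil q p. Proof. octF. Qed.
Lemma bilD (p q r : Oct F) : bil p (q + r) = bil p q + bil p r. Proof. octF. Qed.
Lemma bilZ k (p q : Oct F) : bil p (k *: q) = k * bil p q. Proof. octF. Qed.
Lemma bilN (p q : Oct F) : bil p (- q) = - bil p q. Proof. octF. Qed.
Lemma bil_self (p : Oct F) : bil p p = 2 * nrm p. Proof. octF. Qed.
Lemma bil_one (p : Oct F) : bil p o1 = 2 * c1 p. Proof. octF. Qed.
Lemma c1D (p q : Oct F) : c1 (p + q) = c1 p + c1 q. Proof. octF. Qed.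
Lemma c1Z k (p : Oct F) : c1 (k *: p) = k * c1 p. Proof. octF. Qed.
Lemma c1N (p : Oct F) : c1 (- p) = - c1 p. Proof. octF. Qed.
Lemma c1_one : c1 o1 = 1. Proof. octF. Qed.
Lemma nrm_one : nrm o1 = 1. Proof. octF. Qed.
Lemma nrm0 : nrm 0 = 0. Proof. octF. Qed.
Lemma nrm_mul (p q : Oct F) : nrm (mul p q) = nrm p * nrm q. Proof. Time octF. Qed.
Lemma om0l (p : Oct F) : mul 0 p = 0. Proof. octR. Qed.
Lemma c1_0 : c1 0 = 0. Proof. octF. Qed.
Lemma bil0 (p : Oct F) : bil p 0 = 0. Proof. octF. Qed.
Lemma c1_conj (p : Oct F) : c1 (oconj p) = c1 p. Proof. octF. Qed.
Lemma conj_im (p : Oct F) : oconj p = - p + (2 * c1 p) *: o1. Proof. octR. Qed.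
Lemma mkE x : toP (mk x) = x. Proof. by []. Qed.

Lemma inImE (h2 : (2:F) != 0) p : inIm p <-> c1 p = 0.
Proof.
split.
- move=> /(congr1 c1); rewrite c1_conj c1N => e.
  have : 2 * c1 p = 0 by rewrite mulr2n mulrDl mul1r {1}e addNr.
  by move/eqP; rewrite mulf_eq0 (negbTE h2) => /eqP.
- by move=> e; rewrite /inIm conj_im e mulr0 scale0r addr0.
Qed.
Definition x2 (p : Oct F) : F := (toP p).1.1.2.
Definition x3 (p : Oct F) : F := (toP p).1.2.1.
Definition x4 (p : Oct F) : F := (toP p).1.2.2.
Definition x5 (p : Oct F) : F := (toP p).2.1.1.
Definition x6 (p : Oct F) : F := (toP p).2.1.2.
Definition x7 (p : Oct F) : F := (toP p).2.2.1.
Definition x8 (p : Oct F) : F := (toP p).2.2.2.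

Lemma x2mk X : x2 (mk X) = X.1.1.2. Proof. by []. Qed.
Lemma x3mk X : x3 (mk X) = X.1.2.1. Proof. by []. Qed.
Lemma x20 : x2 0 = 0. Proof. by []. Qed.
Lemma x30 : x3 0 = 0. Proof. by []. Qed.
Hypotheses (ha : a != 0) (hb : b != 0) (hg : g != 0) (h2 : (2:F) != 0).

Lemma exists_bil (x : Oct F) : x != 0 -> c1 x = 0 -> exists v, c1 v = 0 /\ bil x v != 0.
Proof.
move=> xnz x1.
have key E k i : c1 (mk E) = 0 -> bil x (mk E) = k * i -> k != 0 -> i != 0 ->
   exists v, c1 v = 0 /\ bil x v != 0.
  by move=> e1 e2 k0 i0; exists (mk E); split=> //; rewrite e2 mulf_neq0.
have n2a : 2 * a != 0 by rewrite mulf_neq0.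
have n2b : 2 * b != 0 by rewrite mulf_neq0.
have n2g : 2 * g != 0 by rewrite mulf_neq0.
case: (eqVneq (x2 x) 0) => [e2|n2]; last first.
  by apply: (key E2 (-(2*a)) (x2 x)) => //; rewrite ?oppr_eq0 ?mulf_neq0 //; rewrite /x2 /x3 /x4 /x5 /x6 /x7 /x8; octF.
case: (eqVneq (x3 x) 0) => [e3|n3]; last first.
  by apply: (key E3 (-(2*b)) (x3 x)) => //; rewrite ?oppr_eq0 ?mulf_neq0 //; rewrite /x2 /x3 /x4 /x5 /x6 /x7 /x8; octF.
case: (eqVneq (x4 x) 0) => [e4|n4]; last first.
  by apply: (key E4 ((2*a)*b) (x4 x)) => //; rewrite ?oppr_eq0 ?mulf_neq0 //; rewrite /x2 /x3 /x4 /x5 /x6 /x7 /x8; octF.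
case: (eqVneq (x5 x) 0) => [e5|n5]; last first.
  by apply: (key E5 (-(2*g)) (x5 x)) => //; rewrite ?oppr_eq0 ?mulf_neq0 //; rewrite /x2 /x3 /x4 /x5 /x6 /x7 /x8; octF.
case: (eqVneq (x6 x) 0) => [e6|n6]; last first.
  by apply: (key E6 ((2*a)*g) (x6 x)) => //; rewrite ?oppr_eq0 ?mulf_neq0 //; rewrite /x2 /x3 /x4 /x5 /x6 /x7 /x8; octF.
case: (eqVneq (x7 x) 0) => [e7|n7]; last first.
  by apply: (key E7 ((2*b)*g) (x7 x)) => //; rewrite ?oppr_eq0 ?mulf_neq0 //; rewrite /x2 /x3 /x4 /x5 /x6 /x7 /x8; octF.
case: (eqVneq (x8 x) 0) => [e8|n8]; last first.
  by apply: (key E8 (-((2*a)*b*g)) (x8 x)) => //; rewrite ?oppr_eq0 ?mulf_neq0 //; rewrite /x2 /x3 /x4 /x5 /x6 /x7 /x8; octF.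
case/negP: xnz; apply/eqP; apply: toP_inj.
move: x1 e2 e3 e4 e5 e6 e7 e8; rewrite /c1 /x2 /x3 /x4 /x5 /x6 /x7 /x8 zeroE.
dO x; rewrite /toP /= => -> -> -> -> -> -> -> ->; by [].
Qed.

Lemma exists_iso (p : Oct F) : p != 0 -> nrm p = 0 -> exists x, [/\ x != 0, c1 x = 0 & nrm x = 0].
Proof.
move=> pnz np.
case: (eqVneq (c1 p) 0) => [c0|cnz]; first by exists p.
have [y [y0 y1 y2]] : exists y, [/\ y != 0, c1 y = 0 & bil p y = 0].
  pose yv := mk ((0, b * x3 p), (-(a * x2 p), 0), ((0,0),(0,0))).
  have yv1 : c1 yv = 0 by rewrite /yv; octF.
  have yv2 : bil p yv = 0 by rewrite /yv /x2 /x3; octF.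
  case: (eqVneq (x2 p) 0) => [e2|n2].
  - case: (eqVneq (x3 p) 0) => [e3|n3].
    + exists (mk E2); split.
      * by apply/eqP => /(congr1 x2); rewrite x2mk x20 /= => /eqP; rewrite oner_eq0.
      * by octF.
      * have -> : bil p (mk E2) = - (2 * a) * x2 p by rewrite /x2; octF.
        by rewrite e2 mulr0.
    + exists yv; split => //.
      by apply/eqP => /(congr1 x2); rewrite /yv x2mk x20 /=; apply/eqP; rewrite mulf_neq0.
  - exists yv; split => //.
    by apply/eqP => /(congr1 x3); rewrite /yv x3mk x30 /=; apply/eqP; rewrite oppr_eq0 mulf_neq0.
case: (eqVneq (nrm y) 0) => [ny|ny]; first by exists y.
exists (mul p y); split.
- apply/eqP => pyz.
  set c := c1 p.
  have e1 : mul (p + (- c) *: o1) y = (- c) *: y by rewrite mul_addl pyz mul_scll om1l add0r.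
  have e2 : nrm (p + (- c) *: o1) = - c ^+ 2.
    rewrite nrm_add np nrm_scl nrm_one bilZ bil_one -/c; ring.
  have := congr1 nrm e1; rewrite nrm_mul nrm_scl e2 => e3.
  have : (2 * c ^+ 2) * nrm y = (- c) ^+ 2 * nrm y - (- c ^+ 2 * nrm y) by ring.
  rewrite -e3 subrr.
  by move/eqP; rewrite !mulf_eq0 (negbTE h2) (negbTE ny) (negbTE cnz).
- have := c1mul p y; rewrite y1 y2 mulr0 subr0.
  by move/eqP; rewrite mulf_eq0 (negbTE h2) => /eqP.
- by rewrite nrm_mul np mul0r.
Qed.
End S.

Section M.
Variables (F : fieldType) (a b g : F).
Hypotheses (ha : a != 0) (hb : b != 0) (hg : g != 0) (h2 : (2:F) != 0).
Local Notation nrm := (nrm a b g).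
Local Notation bil := (bil a b g).
Local Notation mul := (omul a b g).
Local Notation o1 := (oone F).

Lemma mul_oppr (p q : Oct F) : mul p (- q) = - mul p q.
Proof. by rewrite -scaleN1r mul_sclr scaleN1r. Qed.

Lemma nil_nrm p : nilpotent a b g p -> nrm p = 0.
Proof.
case=> n; have e : nrm (iter n (mul p) p) = nrm p ^+ n.+1.
  by elim: n => [|n IH]; [rewrite expr1 | rewrite iterS nrm_mul IH [RHS]exprS].
move=> H; move: e; by rewrite H nrm0 => /esym/eqP; rewrite expf_eq0 /= => /eqP.
Qed.

Lemma nrm_nil p : c1 p = 0 -> nrm p = 0 -> nilpotent a b g p.
Proof. by move=> e1 e2; exists 1%N; rewrite /= sqE e1 e2 mulr0 !scale0r subrr. Qed.

Lemma span2P (u v z : Oct F) :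
  reflect (exists k1 k2, z = k1 *: u + k2 *: v) (z \in <<[:: u; v]>>%VS).
Proof.
apply: (iffP idP).
- by rewrite span_cons span_seq1 => /memv_addP [z1 /vlineP [k1 ->] [z2 /vlineP [k2 ->] ->]]; exists k1, k2.
- case=> k1 [k2 ->]; rewrite span_cons span_seq1; apply: memv_add; apply/vlineP; by eexists.
Qed.

Lemma span3P (u v w z : Oct F) : z \in <<[:: u; v; w]>>%VS ->
  exists k1 k2 k3, z = k1 *: u + (k2 *: v + k3 *: w).
Proof.
rewrite span_cons => /memv_addP [z1 /vlineP [k1 ->] [z2 /span2P [k2 [k3 ->]] ->]].
by exists k1, k2, k3.
Qed.

Lemma span4P (o u v w z : Oct F) : z \in <<[:: o; u; v; w]>>%VS ->
  exists k0 k1 k2 k3, z = k0 *: o + (k1 *: u + (k2 *: v + k3 *: w)).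
Proof.
rewrite span_cons => /memv_addP [z1 /vlineP [k0 ->] [z2 /span3P [k1 [k2 [k3 ->]]] ->]].
by exists k0, k1, k2, k3.
Qed.

Lemma line_eq (L : {vspace Oct F}) z : \dim L = 1%N -> z \in L -> z != 0 -> L = <[z]>%VS.
Proof.
move=> dL zL z0; apply/eqP; rewrite eq_sym eqEdim -memvE zL dL dim_vline z0 //.
Qed.

Lemma line_nz (L : {vspace Oct F}) : \dim L = 1%N -> exists2 z, z \in L & z != 0.
Proof.
move=> dL; exists (vpick L); first exact: memv_pick.
by rewrite vpick0 -dimv_eq0 dL.
Qed.

Lemma line_scale k (v : Oct F) : k != 0 -> v != 0 -> <[k *: v]>%VS = <[v]>%VS.
Proof.
move=> k0 v0; apply/esym/line_eq; first by rewrite dim_vline v0.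
  by rewrite memvZ // memv_line.
by rewrite scaler_eq0 negb_or k0 v0.
Qed.

Lemma nil_line_of u : u != 0 -> c1 u = 0 -> nrm u = 0 -> nil_line a b g <[u]>%VS.
Proof.
move=> u0 hu nu; split; first by rewrite dim_vline u0.
by move=> z /vlineP [k ->]; apply: nrm_nil; [rewrite c1Z hu mulr0 | rewrite nrm_scl nu mulr0].
Qed.

Lemma sub_im_span2 (u v : Oct F) : c1 u = 0 -> c1 v = 0 -> sub_im <<[:: u; v]>>%VS.
Proof.
move=> hu hv z /span2P [k1 [k2 ->]]; apply/(inImE h2).
by rewrite c1D !c1Z hu hv !mulr0 addr0.
Qed.

Lemma dim_span2 (u v : Oct F) : v != 0 -> u \notin <[v]>%VS -> \dim <<[:: u; v]>> = 2%N.
Proof.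
move=> v0 uv; have : free [:: u; v] by rewrite free_cons seq1_free span_seq1 uv v0.
by move/eqP.
Qed.

Lemma sub_line_span2 (u v : Oct F) : (<[u]> <= <<[:: u; v]>>)%VS /\ (<[v]> <= <<[:: u; v]>>)%VS.
Proof. by split; rewrite -memvE; apply: memv_span; rewrite !inE eqxx ?orbT. Qed.

Lemma typeM_pair u v : c1 u = 0 -> c1 v = 0 -> nrm u = 0 -> nrm v = 0 -> bil u v != 0 ->
  typeM a b g <<[:: u; v]>>%VS.
Proof.
move=> hu hv nu nv buv.
have u0 : u != 0 by apply: contraNneq buv => ->; rewrite bilC bil0.
have v0 : v != 0 by apply: contraNneq buv => ->; rewrite bil0.
have uv : u \notin <[v]>%VS.
  apply/vlineP => -[k e]; move: buv; rewrite e bilC bilZ bil_self nv mulr0 mulr0.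
  by rewrite eqxx.
have [s1 s2] := sub_line_span2 u v.
split; first exact: dim_span2; first exact: sub_im_span2.
exists <[u]>%VS, <[v]>%VS; split.
- by apply/eqP => e; move/negP: uv; apply; rewrite -e memv_line.
- by split=> //; apply: nil_line_of.
- by split=> //; apply: nil_line_of.
- move=> L [dL nL] sL; have [z zL z0] := line_nz dL.
  have eL := line_eq dL zL z0.
  have /span2P [k1 [k2 ez]] := subvP sL z zL.
  have nz := nil_nrm (nL z zL).
  move: nz; rewrite ez nrm_add !nrm_scl nu nv bilZ bilC bilZ !mulr0 !add0r => /eqP.
  rewrite !mulf_eq0 bilC (negbTE buv) orbF => /orP [] /eqP k0.
  + left; move: z0; rewrite eL ez k0 scale0r addr0 => z0.
    by apply: line_scale => //; apply: contraNneq z0 => ->; rewrite scale0r.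
  + right; move: z0; rewrite eL ez k0 scale0r add0r => z0.
    by apply: line_scale => //; apply: contraNneq z0 => ->; rewrite scale0r.
Qed.

Lemma typeU_pair u w c : c1 u = 0 -> c1 w = 0 -> nrm u = 0 -> nrm w != 0 -> bil u w = 0 ->
  u != 0 -> mul u w = c *: u -> typeU a b g <<[:: u; w]>>%VS.
Proof.
move=> hu hw nu nw buw u0 uw.
have w0 : w != 0 by apply: contraNneq nw => ->; rewrite nrm0.
have uwl : u \notin <[w]>%VS.
  apply/vlineP => -[k e]; move: (congr1 nrm e); rewrite nrm_scl nu => /esym/eqP.
  rewrite mulf_eq0 (negbTE nw) orbF expf_eq0 /= => /eqP k0.
  by move/eqP: u0; apply; rewrite e k0 scale0r.
have [s1 s2] := sub_line_span2 u w.
have uu : mul u u = 0 by rewrite sqE hu nu mulr0 !scale0r subrr.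
split; first exact: dim_span2; first exact: sub_im_span2.
exists u; split=> //; first exact: nil_line_of.
- move=> L [dL nL] sL; have [z zL z0] := line_nz dL.
  have eL := line_eq dL zL z0.
  have /span2P [k1 [k2 ez]] := subvP sL z zL.
  have nz := nil_nrm (nL z zL).
  move: nz; rewrite ez nrm_add !nrm_scl nu bilZ bilC bilZ (bilC a b g w u) buw !mulr0 add0r addr0 => /eqP.
  rewrite mulf_eq0 (negbTE nw) orbF expf_eq0 /= => /eqP k0.
  move: z0; rewrite eL ez k0 scale0r addr0 => z0.
  by apply: line_scale => //; apply: contraNneq z0 => ->; rewrite scale0r.
- move=> v /span2P [k1 [k2 ->]]; rewrite mul_addr !mul_sclr uu uw scaler0 add0r scalerA.
  by rewrite memvZ // memv_line.
Qed.

Lemma core (frakH : {vspace Oct F} -> Prop)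
  (hH : forall H, frakH H -> assoc_subalg4 a b g H) (x y : Oct F) :
  x != 0 -> c1 x = 0 -> c1 y = 0 -> nrm x = 0 -> nrm y = 0 -> bil x y != 0 ->
  ((exists U, typeM a b g U /\ forall B, inB frakH B -> ~ (U <= B)%VS) \/
   (exists U, typeU a b g U /\
      exists B1 B2, [/\ inB frakH B1, inB frakH B2, B1 != B2,
                       (U <= B1)%VS & (U <= B2)%VS])).
Proof.
move=> x0 hx hy nx ny bxy.
set be := bil x y.
have xx : mul x x = 0 by rewrite sqE hx nx mulr0 !scale0r subrr.
have yy : mul y y = 0 by rewrite sqE hy ny mulr0 !scale0r subrr.
have ant : mul x y + mul y x = - be *: o1.
  by rewrite anti hx hy mulr0 !scale0r !add0r scaleNr.
have yx : mul y x = - be *: o1 - mul x y by rewrite -ant [mul x y + _]addrC addrK.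
have xye : mul x y = - be *: o1 - mul y x by rewrite -ant addrK.
have c1xy : c1 (mul x y) = - be / 2.
  have := c1mul a b g x y; rewrite hx mulr0 mul0r sub0r -/be => e.
  by apply: (mulfI h2); rewrite e; field; rewrite ?h2 ?bxy.
have hbe2 : - be / 2 != 0 by rewrite mulf_neq0 ?oppr_eq0 ?invr_eq0.
have xxr r : mul x (mul x r) = 0 by rewrite alt xx om0l.
have yyr r : mul y (mul y r) = 0 by rewrite alt yy om0l.
have lin r : mul x (mul y r) + mul y (mul x r) = - be *: r by rewrite altlin ant mul_scll om1l.
have yxy : mul y (mul x y) = - be *: y.
  by rewrite [mul x y]xye mul_addr mul_sclr om1r mul_oppr yyr oppr0 addr0.
pose w := 2 *: mul x y + be *: o1.
have c1w : c1 w = 0 by rewrite /w c1D !c1Z c1xy c1_one; field; rewrite ?h2 ?bxy.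
have nw : nrm w = - be ^+ 2.
  rewrite /w nrm_add !nrm_scl nrm_mul nx mul0r mulr0 add0r nrm_one mulr1.
  by rewrite bilC bilZ bilC bilZ bil_one c1xy; field; rewrite ?h2 ?bxy.
have bxw : bil x w = 0.
  by rewrite /w bilD !bilZ bilmul nx mul0r mulr0 bil_one hx !mulr0 addr0.
have xw : mul x w = be *: x by rewrite /w mul_addr !mul_sclr xxr om1r scaler0 add0r.
have nw0 : nrm w != 0 by rewrite nw oppr_eq0 sqrf_eq0.
have tU := typeU_pair hx c1w nx nw0 bxw x0 xw.
pose S4 := <<[:: o1; x; y; mul x y]>>%VS.
have m1 : o1 \in S4 by apply: memv_span; rewrite !inE eqxx ?orbT.
have mx : x \in S4 by apply: memv_span; rewrite !inE eqxx ?orbT.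
have my : y \in S4 by apply: memv_span; rewrite !inE eqxx ?orbT.
have mxy : mul x y \in S4 by apply: memv_span; rewrite !inE eqxx ?orbT.
have yS r : r \in S4 -> mul y r \in S4.
  move=> /span4P [k0 [k1 [k2 [k3 ->]]]].
  rewrite !mul_addr !mul_sclr om1r yx yy yxy scaler0.
  apply: memvD; first by apply: memvZ.
  apply: memvD; first by apply: memvZ; apply: memvB => //; apply: memvZ.
  by apply: memvD; [apply: mem0v | apply: memvZ; apply: memvZ].
have [q hq] : exists q, mul x q \notin S4.
  apply: NNPP => nq.
  have allq q : mul x q \in S4 by apply/negPn/negP => h; apply: nq; exists q.
  have full : (fullv <= S4)%VS.
    apply/subvP => r _; have : - be *: r \in S4.
      by rewrite -lin; apply: memvD; [apply: allq | apply: yS; apply: allq].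
    by move/(memvZ (- be)^-1); rewrite scalerK ?oppr_eq0.
  have := leq_trans (dimvS full) (dim_span _); rewrite dimvf.
  by [].
pose z0 := mul x q.
pose k1 := 2 * c1 z0 / be.
pose k0 := - bil y z0 / be.
pose z := mul x (q + k0 *: o1 + k1 *: y).
have zE : z = z0 + k0 *: x + k1 *: mul x y by rewrite /z !mul_addr !mul_sclr om1r.
have znS : z \notin S4.
  apply/negP => zS; move/negP: hq; apply.
  have -> : mul x q = z - k1 *: mul x y - k0 *: x by rewrite zE !addrK.
  by apply: memvB; [apply: memvB => //; apply: memvZ | apply: memvZ].
have c1z : c1 z = 0 by rewrite zE !c1D !c1Z hx c1xy /k1; field; rewrite ?h2 ?bxy.
have byz : bil y z = 0.
  rewrite zE !bilD !bilZ (bilC a b g y x) -/be (bilC a b g y (mul x y)) bilmul2 ny mul0r.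
  by rewrite /k0; field; rewrite ?h2 ?bxy.
have nz : nrm z = 0 by rewrite /z nrm_mul nx mul0r.
have bxz : bil x z = 0 by rewrite /z bilmul nx mul0r.
have xz : mul x z = 0 by rewrite /z xxr.
pose y' := y + z.
have c1y' : c1 y' = 0 by rewrite /y' c1D hy c1z addr0.
have ny' : nrm y' = 0 by rewrite /y' nrm_add ny nz byz !addr0.
have bxy' : bil x y' = be by rewrite /y' bilD bxz addr0.
have xy' : mul x y' = mul x y by rewrite /y' mul_addr xz addr0.
have tM1 := typeM_pair hx hy nx ny bxy.
have tM2 : typeM a b g <<[:: x; y']>>%VS by apply: typeM_pair; rewrite ?bxy'.
have dimS4 : \dim S4 = 4%N.
  have f : free [:: o1; x; y; mul x y].
    rewrite free_cons; apply/andP; split.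
      apply/negP => /span3P [l1 [l2 [l3 e]]].
      have e1 := congr1 (bil x) e.
      rewrite !bilD !bilZ bil_self nx bilmul nx bil_one hx -/be !mul0r !mulr0 add0r addr0 in e1.
      have l20 : l2 = 0 by move/esym/eqP: e1; rewrite mulf_eq0 (negbTE bxy) orbF => /eqP.
      have e2 := congr1 (bil y) e.
      rewrite !bilD !bilZ bil_self ny (bilC a b g y x) -/be (bilC a b g y (mul x y)) bilmul2 ny bil_one hy !mul0r !mulr0 !addr0 in e2.
      have l10 : l1 = 0 by move/esym/eqP: e2; rewrite mulf_eq0 (negbTE bxy) orbF => /eqP.
      have e3 := congr1 (mul x) e.
      rewrite l10 l20 !scale0r !add0r om1r mul_sclr xxr scaler0 in e3.
      by move/eqP: x0.
    rewrite free_cons; apply/andP; split.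
      apply/negP => /span2P [l1 [l2 e]].
      have e1 := congr1 (bil x) e.
      rewrite !bilD !bilZ bil_self nx bilmul nx -/be !mul0r !mulr0 addr0 in e1.
      have l10 : l1 = 0 by move/esym/eqP: e1; rewrite mulf_eq0 (negbTE bxy) orbF => /eqP.
      have e2 := congr1 (@c1 F) e.
      rewrite c1D !c1Z hx hy c1xy l10 mul0r add0r in e2.
      have l20 : l2 = 0 by move/esym/eqP: e2; rewrite mulf_eq0 (negbTE hbe2) orbF => /eqP.
      by move: e; rewrite l10 l20 !scale0r addr0; move/eqP: x0.
    rewrite free_cons span_seq1 seq1_free; apply/andP; split.
      apply/negP => /vlineP [l e].
      have e2 := congr1 (@c1 F) e.
      rewrite c1Z hy c1xy in e2.
      have l0 : l = 0 by move/esym/eqP: e2; rewrite mulf_eq0 (negbTE hbe2) orbF => /eqP.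
      by move: bxy; rewrite /be e l0 scale0r bil0 eqxx.
    by apply: contraNneq hbe2 => e; rewrite -c1xy e c1_0.
  by move/eqP: f.
case: (classic (exists B, inB frakH B /\ (<<[:: x; y]>> <= B)%VS)) => [[B1 [iB1 sB1]]|n1]; last first.
  left; exists <<[:: x; y]>>%VS; split => // B iB sB; apply: n1; by exists B.
case: (classic (exists B, inB frakH B /\ (<<[:: x; y']>> <= B)%VS)) => [[B2 [iB2 sB2]]|n2]; last first.
  left; exists <<[:: x; y']>>%VS; split => // B iB sB; apply: n2; by exists B.
right; exists <<[:: x; w]>>%VS; split => //.
have [H1 fH1 imH1] := iB1; have [H2 fH2 imH2] := iB2.
have [dH1 oH1 mH1 _] := hH H1 fH1; have [dH2 oH2 mH2 _] := hH H2 fH2.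
have [s1x s1y] := sub_line_span2 x y; have [s2x s2y] := sub_line_span2 x y'.
have xB1 : x \in B1 by apply: (subvP sB1); rewrite -memvE in s1x.
have yB1 : y \in B1 by apply: (subvP sB1); rewrite -memvE in s1y.
have xB2 : x \in B2 by apply: (subvP sB2); rewrite -memvE in s2x.
have yB2 : y' \in B2 by apply: (subvP sB2); rewrite -memvE in s2y.
have xH1 := (proj1 (imH1 x) xB1).1; have yH1 := (proj1 (imH1 y) yB1).1.
have xH2 := (proj1 (imH2 x) xB2).1; have yH2 := (proj1 (imH2 y') yB2).1.
have wim : inIm w by apply/(inImE h2).
exists B1, B2; split => //.
- apply/eqP => eB; move: yB2; rewrite -eB => /imH1 [y'H1 _].
  have zH1 : z \in H1 by have := memvB y'H1 yH1; rewrite /y' [y + z]addrC addrK.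
  have sS : (S4 <= H1)%VS.
    apply/span_subvP => r; rewrite !inE => /orP [/eqP ->|/orP [/eqP ->|/orP [/eqP ->|/eqP ->]]] //.
    exact: mH1.
  have eS : S4 = H1 by apply/eqP; rewrite eqEdim sS dimS4 dH1.
  by move/negP: znS; apply; rewrite eS.
- apply/span_subvP => r; rewrite !inE => /orP [/eqP ->|/eqP ->] //.
  apply/imH1; split => //.
  by apply: memvD; apply: memvZ => //; apply: mH1.
- apply/span_subvP => r; rewrite !inE => /orP [/eqP ->|/eqP ->] //.
  apply/imH2; split => //.
  by apply: memvD; apply: memvZ => //; rewrite -xy'; apply: mH2.
Qed.

End M.

Lemma nodesign (F : fieldType) (a b g : F) (frakH : {vspace Oct F} -> Prop) :
  ((exists U, typeM a b g U /\ forall B, inB frakH B -> ~ (U <= B)%VS) \/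
   (exists U, typeU a b g U /\
      exists B1 B2, [/\ inB frakH B1, inB frakH B2, B1 != B2,
                       (U <= B1)%VS & (U <= B2)%VS])) ->
  ~ design_2_7_3_1 (inB frakH).
Proof.
move=> [[U [[dU sU _] nB]] | [U [[dU sU _] [B1 [B2 [i1 i2 ne s1 s2]]]]]] [_ D].
- by have [B [iB sB _]] := D U dU sU; exact: nB B iB sB.
- have [B [iB sB uq]] := D U dU sU.
  by move/eqP: ne; apply; rewrite (uq _ i1 s1) (uq _ i2 s2).
Qed.

Unset Implicit Arguments.
Theorem mainTheorem13 (F : fieldType) (a b g : F)
  (ha : a != 0) (hb : b != 0) (hg : g != 0) (hchar : (2 : F) != 0)
  (split : exists x y : Oct F, [/\ x != 0, y != 0 & omul a b g x y = 0])
  (frakH : {vspace Oct F} -> Prop)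
  (hH : forall H, frakH H -> assoc_subalg4 a b g H) :
  ((exists U, typeM a b g U /\ forall B, inB frakH B -> ~ (U <= B)%VS) \/
   (exists U, typeU a b g U /\
      exists B1 B2, [/\ inB frakH B1, inB frakH B2, B1 != B2,
                       (U <= B1)%VS & (U <= B2)%VS])) /\
  ~ design_2_7_3_1 (inB frakH).
Proof.
have [p [q [p0 q0 pq]]] := split.
have e : nrm a b g p * nrm a b g q = 0 by rewrite -nrm_mul pq nrm0.
have [p' [p'0 np']] : exists p', p' != 0 /\ nrm a b g p' = 0.
  by move/eqP: e; rewrite mulf_eq0 => /orP [/eqP e|/eqP e]; [exists p | exists q].
have [x [x0 hx nx]] := exists_iso ha hb hchar p'0 np'.
have [v [hv bv]] := exists_bil ha hb hg hchar x0 hx.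
pose k := - (nrm a b g v / bil a b g x v).
pose y := v + k *: x.
have hy : c1 y = 0 by rewrite /y c1D c1Z hx hv mulr0 addr0.
have ny : nrm a b g y = 0.
  by rewrite /y nrm_add nrm_scl nx mulr0 addr0 bilZ (bilC a b g v x) /k; field.
have bxy : bil a b g x y != 0 by rewrite /y bilD bilZ bil_self nx mulr0 mulr0 addr0.
have C := core hchar hH x0 hx hy nx ny bxy.
split; first exact: C.
exact: nodesign C.
Qed.
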